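(* For $i=0,1,2,\dots$ let $D_i=\{(v_0,\dots,v_i)\in\mathbb{R}^{i+1}:\ 0\le v_i\le\cdots\le v_0\}$, and let $\varphi_i:D_i\to\mathbb{R}$ be functions that are positive and do not exceed $1$ on $D_i$. Suppose there exist functions $\psi_i:D_i\to\mathbb{R}$ with $$0<\psi_i(v_0,\dots,v_i)\le\varphi_i(v_0,\dots,v_i)\le 1\quad\text{on } D_i,\qquad i=0,1,2,\dots,$$ which are monotone decreasing in the set of their arguments, i.e. $v_0\le u_0,\dots,v_i\le u_i$ implies $\psi_i(v_0,\dots,v_i)\ge\psi_i(u_0,\dots,u_i)$. Let $\{V_i\}_{i=0}^\infty$ be a positive numeric sequence defined recurrently by $$V_{i+1}-V_i=-\varphi_i(V_0,\dots,V_i)\,V_i,\qquad i=0,1,2,\dots$$ Then the sequence $\{U_i\}_{i=0}^\infty$ defined by $U_0=V_0$ and $$U_{i+1}-U_i=-\psi_i(U_0,\dots,U_i)\,U_i,\qquad i=0,1,2,\dots$$ is majorizing: $V_i\le U_i$ for all $i=1,2,3,\dots$ *)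

(* Defs.v *)
From mathcomp Require Import all_boot all_order all_algebra.
From mathcomp Require Import reals.
Set Implicit Arguments. Unset Strict Implicit. Unset Printing Implicit Defensive.
Import Order.TTheory GRing.Theory Num.Theory.
Local Open Scope ring_scope.

(* A point (v_0,...,v_i) of R^{i+1} is a function 'I_i.+1 -> R.
   D_i = { v : 0 <= v_i <= v_{i-1} <= ... <= v_0 }. *)
Definition inD (R : realType) (i : nat) (v : 'I_i.+1 -> R) : Prop :=
  0 <= v ord_max /\ forall j k : 'I_i.+1, (j <= k)%N -> v k <= v j.

Definition seqpre (R : realType) (x : nat -> R) (i : nat) : 'I_i.+1 -> R :=
  fun k => x (nat_of_ord k).
Arguments seqpre {R} x i _.

(* Main.v *)
Require Import Defs.
From mathcomp Require Import all_boot all_order all_algebra.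
From mathcomp Require Import reals.
From mathcomp Require Import lra.
Import Order.TTheory GRing.Theory Num.Theory.
Local Open Scope ring_scope.

Lemma inD_of (R : realType) (x : nat -> R) i :
  (forall n, (n < i)%N -> x n.+1 <= x n) -> 0 <= x i -> inD (seqpre x i).
Proof.
move=> Hm H0; split; first by [].
move=> j k jk; rewrite /seqpre.
have Hk := ltn_ord k.
have : (k <= i)%N by [].
move: (nat_of_ord j) (nat_of_ord k) jk => {j k Hk} j k.
elim: k j => [|k IH] j.
  by rewrite leqn0 => /eqP -> _.
rewrite leq_eqVlt => /orP [/eqP -> _|]; first by [].
rewrite ltnS => jk ki.
apply: le_trans (Hm k ki) _.
by apply: IH => //; apply: ltnW.
Qed.

Theorem lemma2 (R : realType)
  (phi psi : forall i : nat, ('I_i.+1 -> R) -> R) (V U : nat -> R)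
  (phi_pos : forall i v, inD v -> 0 < phi i v)
  (phi_le1 : forall i v, inD v -> phi i v <= 1)
  (psi_pos : forall i v, inD v -> 0 < psi i v)
  (psi_le_phi : forall i v, inD v -> psi i v <= phi i v)
  (psi_mono : forall i (v u : 'I_i.+1 -> R), inD v -> inD u ->
      (forall k, v k <= u k) -> psi i u <= psi i v)
  (V_pos : forall i, 0 < V i)
  (V_rec : forall i, V i.+1 - V i = - phi i (seqpre V i) * V i)
  (U0 : U 0%N = V 0%N)
  (U_rec : forall i, U i.+1 - U i = - psi i (seqpre U i) * U i) :
  forall i : nat, (1 <= i)%N -> V i <= U i.
Proof.
have Q : forall i, (forall n, (n < i)%N -> V n.+1 <= V n /\ U n.+1 <= U n)
   /\ 0 <= U i /\ forall n, (n <= i)%N -> V n <= U n.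
  elim=> [|i [Hm [HU HVU]]].
    split; first by [].
    split; first by rewrite U0; apply: ltW.
    by move=> n; rewrite leqn0 => /eqP ->; rewrite U0.
  have DV : inD (seqpre V i).
    by apply: inD_of; [move=> n /Hm [] | apply: ltW].
  have DU : inD (seqpre U i) by apply: inD_of; [move=> n /Hm [] |].
  have a0 := phi_pos _ _ DV. have a1 := phi_le1 _ _ DV.
  have b0 := psi_pos _ _ DU.
  have b1 := le_trans (psi_le_phi _ _ DU) (phi_le1 _ _ DU).
  have ba : psi i (seqpre U i) <= phi i (seqpre V i).
    apply: le_trans (psi_le_phi _ _ DV).
    apply: psi_mono => // k; rewrite /seqpre; apply: HVU.
    by rewrite -ltnS.
  have Vi0 := V_pos i. have Vii := HVU i (leqnn i).
  have EV := V_rec i. have EU := U_rec i.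
  have s1 : V i.+1 <= V i by nra.
  have s2 : U i.+1 <= U i by nra.
  have s3 : 0 <= U i.+1 by nra.
  have s4 : V i.+1 <= U i.+1 by nra.
  split; last split => //.
    move=> n; rewrite ltnS leq_eqVlt => /orP [/eqP -> //|]; exact: Hm.
  move=> n; rewrite leq_eqVlt => /orP [/eqP -> //|]; rewrite ltnS; exact: HVU.
by move=> i _; case: (Q i) => _ [_ H]; apply: H.
Qed.
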